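(* Let $n\ge1$, $N\ge3$, $m=n+N$, let $u>0$ solve $\partial_tu=\Delta_xu$ on $\mathbb{R}^n\times(0,\infty)$ with $u=t^{-n/2}e^{-f}$, fix $0<\tau_1<\tau_2$ and assume $f$ and all of its partial derivatives in $x,t$ are bounded on $\mathbb{R}^n\times[\tau_1,\tau_2]$. Let $v,b,B$ be as in the context and, at $(x,y)$, set $\tau=\frac{|y|^2}{2N}\in[\tau_1,\tau_2]$. Then, in block form with respect to $\mathbb{R}^m=\mathbb{R}^n\times\mathbb{R}^N$, \[ \mathrm{Hess}(b^2)(x,y)=\frac{2b^2}{N}\Big(\mathrm{Hess}_xf(x,\tau)\oplus\frac{1}{2\tau}I_N+O(N^{-1/2})\,Q_1+O(N^{-1})\,Q_2\Big), \] where $\mathrm{Hess}_xf(x,\tau)$ occupies the $n\times n$ block and $\frac1{2\tau}I_N$ the $N\times N$ block, $Q_1$ is a matrix supported in the off-diagonal blocks and $Q_2$ a matrix supported in the two diagonal blocks, with entries bounded independently of $N$. Moreover \[ |B|^2=\frac{4b^4}{N^2}\Big(\Big|\mathrm{Hess}_xf(x,\tau)-\frac{1}{2\tau}I_n\Big|^2+O(N^{-1})\Big). \] Here the $O(\cdot)$ constants do not depend on $N,x,y$.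
   Context: $\mathbb{R}^m=\mathbb{R}^n\times\mathbb{R}^N$, points $(x,y)$, $r=|y|$; $\mathrm{Hess}$ and $\Delta$ are Euclidean on $\mathbb{R}^m$, $\mathrm{Hess}_x$ is the Hessian in $x$. $v(x,y)=r^{2-m}\exp(-f(x,\tfrac{r^2}{2N}))$, $b=v^{1/(2-m)}$, $B=\mathrm{Hess}(b^2)-\frac{\Delta b^2}{m}I_m$, $|\cdot|^2$ the squared Hilbert–Schmidt norm. *)

(* Defs.v *)
From HB Require Import structures.
From mathcomp Require Import all_boot all_order all_algebra.
From mathcomp Require Import all_classical all_reals all_analysis.
Set Implicit Arguments. Unset Strict Implicit. Unset Printing Implicit Defensive.
Import Order.TTheory GRing.Theory Num.Theory.
Import numFieldNormedType.Exports.
Local Open Scope ring_scope.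

Section Defs.
Variable R : realType.

Definition ebas (k : nat) (i : 'I_k) : 'rV[R]_k := delta_mx 0 i.

(* Functions g(x,t) on R^n x R.  Partial derivative in direction
   Some i (= d/dx_i) or None (= d/dt). *)
Definition partial (n : nat) (g : 'rV[R]_n -> R -> R) (d : option 'I_n)
  : 'rV[R]_n -> R -> R :=
  fun x t => match d with
             | Some i => derive (fun x' => g x' t) x (ebas i)
             | None => derive (g x) t 1
             end.

(* iterated partial derivative: iter_partial g [:: d1; ...; dk] = d_{d1} ... d_{dk} g *)
Definition iter_partial (n : nat) (g : 'rV[R]_n -> R -> R) (l : seq (option 'I_n))
  : 'rV[R]_n -> R -> R := foldr (fun d h => partial h d) g l.

Definition smooth_pos (n : nat) (f : 'rV[R]_n -> R -> R) : Prop :=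
  forall (l : seq (option 'I_n)) (x : 'rV[R]_n) (t : R), 0 < t ->
    {for (x, t), continuous (fun z : 'rV[R]_n * R => iter_partial f l z.1 z.2)} /\
    (forall i : 'I_n, derivable (fun x' => iter_partial f l x' t) x (ebas i)) /\
    derivable (iter_partial f l x) t 1.

Definition heat_u (n : nat) (f : 'rV[R]_n -> R -> R) (x : 'rV[R]_n) (t : R) : R :=
  t `^ (- (n%:R / 2)) * expR (- f x t).

Definition heat_sol (n : nat) (f : 'rV[R]_n -> R -> R) : Prop :=
  forall (x : 'rV[R]_n) (t : R), 0 < t ->
    derive (heat_u f x) t 1 =
    \sum_(i < n) derive (fun x' => derive (fun x'' => heat_u f x'' t) x' (ebas i))
                        x (ebas i).

Definition bounded_partials (n : nat) (f : 'rV[R]_n -> R -> R) (tau1 tau2 : R) : Prop :=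
  forall l : seq (option 'I_n), exists C : R, forall (x : 'rV[R]_n) (t : R),
    tau1 <= t <= tau2 -> `|iter_partial f l x t| <= C.

Definition hessx (n : nat) (f : 'rV[R]_n -> R -> R) (x : 'rV[R]_n) (t : R) : 'M[R]_n :=
  \matrix_(i, j) iter_partial f [:: Some i; Some j] x t.

Definition hess (k : nat) (h : 'rV[R]_k -> R) (p : 'rV[R]_k) : 'M[R]_k :=
  \matrix_(i, j) derive (fun q => derive h q (ebas j)) p (ebas i).

Definition enorm (k : nat) (y : 'rV[R]_k) : R := Num.sqrt (\sum_(i < k) y 0 i ^+ 2).

Definition hs2 (k : nat) (A : 'M[R]_k) : R := \sum_(i < k) \sum_(j < k) A i j ^+ 2.

Definition vfun (n N : nat) (f : 'rV[R]_n -> R -> R) (p : 'rV[R]_(n + N)) : R :=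
  let r := enorm (rsubmx p) in
  r `^ (2 - (n + N)%:R) * expR (- f (lsubmx p) (r ^+ 2 / (2 * N%:R))).

Definition bfun (n N : nat) (f : 'rV[R]_n -> R -> R) (p : 'rV[R]_(n + N)) : R :=
  vfun f p `^ (1 / (2 - (n + N)%:R)).

Definition bsq (n N : nat) (f : 'rV[R]_n -> R -> R) (p : 'rV[R]_(n + N)) : R :=
  bfun f p ^+ 2.

Definition Bmat (n N : nat) (f : 'rV[R]_n -> R -> R) (p : 'rV[R]_(n + N)) : 'M[R]_(n + N) :=
  hess (@bsq n N f) p - (\tr (hess (@bsq n N f) p) / (n + N)%:R)%:M.

Definition offdiag_supp (n N : nat) (Q : 'M[R]_(n + N)) : Prop :=
  ulsubmx Q = 0 /\ drsubmx Q = 0.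
Definition diag_supp (n N : nat) (Q : 'M[R]_(n + N)) : Prop :=
  ursubmx Q = 0 /\ dlsubmx Q = 0.

End Defs.

(* Main.v *)
Require Import Defs.
From HB Require Import structures.
From mathcomp Require Import all_boot all_order all_algebra.
From mathcomp Require Import all_classical all_reals all_analysis.
Import Order.TTheory GRing.Theory Num.Theory.
Import numFieldNormedType.Exports.
From mathcomp Require Import ring lra.
Local Open Scope ring_scope.

Section Calc.
Variable R : realType.

Lemma line_eq (V1 V2 W : normedModType R) (F : V1 -> W) (P : V2 -> W) a v b w d :
  (forall h : R, F (h *: v + a) = P (h *: w + b)) -> is_derive b w P d -> is_derive a v F d.
Proof.
move=> FP [dP <-].
have Fa : F a = P b by have := FP 0; rewrite !scale0r !add0r.
have E : (fun h : R => h^-1 *: ((F \o shift a) (h *: v) - F a)) =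
         (fun h : R => h^-1 *: ((P \o shift b) (h *: w) - P b)).
  by apply/funext => h /=; rewrite FP Fa.
apply: DeriveDef; first by rewrite /derivable E.
by rewrite /derive E.
Qed.

Lemma isd_comp (V : normedModType R) (phi : V -> R) (g : R -> R) a v dphi dg :
  is_derive a v phi dphi -> is_derive (phi a) 1 g dg ->
  is_derive a v (fun q => g (phi q)) (dg * dphi).
Proof.
move=> Hphi Hg.
pose psi := fun h : R => phi (h *: v + a).
have Hpsi : is_derive (0:R) (1:R) psi dphi.
  apply: (@line_eq _ _ _ psi phi 0 1 a v) => // h.
  by rewrite /psi scaler1 addr0.
have psi0 : psi 0 = phi a by rewrite /psi scale0r add0r.
have Hg' : is_derive (psi 0) 1 g dg by rewrite psi0.
have := @is_derive1_comp R g psi 0 dg dphi Hg' Hpsi.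
move=> H; apply: (@line_eq _ _ _ _ (g \o psi) a v 0 1) => // h.
by rewrite /= /psi scaler1 addr0.
Qed.

Lemma isdD (V : normedModType R) (F G : V -> R) a v dF dG :
  is_derive a v F dF -> is_derive a v G dG -> is_derive a v (fun q => F q + G q) (dF + dG).
Proof. move=> H1 H2; exact: is_deriveD. Qed.

Lemma isdM (V : normedModType R) (F G : V -> R) a v dF dG :
  is_derive a v F dF -> is_derive a v G dG ->
  is_derive a v (fun q => F q * G q) (F a * dG + G a * dF).
Proof. move=> H1 H2; exact: is_deriveM. Qed.

Lemma isdC (V : normedModType R) (k : R) a (v : V) : is_derive a v (fun _ => k) 0.
Proof. exact: is_derive_cst. Qed.
Arguments isdC {V}.
Arguments isdD {V F G a v dF dG}.
Arguments isdM {V F G a v dF dG}.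
Arguments isd_comp {V phi g a v dphi dg}.

Lemma isdId (a v : R) : is_derive a v (fun h => h) v.
Proof. exact: is_derive_id. Qed.

Lemma isd_poly (V : normedModType R) (F : V -> R) a v d k :
  (forall h : R, F (h *: v + a) = F a + h * d + h ^+ 2 * k) -> is_derive a v F d.
Proof.
move=> FP.
apply: (@line_eq _ _ _ F (fun h : R => F a + h * d + h * h * k) a v 0 1).
  by move=> h; rewrite FP scaler1 addr0 expr2.
have H1 := isdC (F a) (0:R) (1:R).
have H2 := isdM (isdId (0:R) (1:R)) (isdC d (0:R) (1:R)).
have H3 := isdM (isdM (isdId (0:R) (1:R)) (isdId (0:R) (1:R))) (isdC k (0:R) (1:R)).
have H4 := isdD (isdD H1 H2) H3.
apply: is_derive_eq H4 _.
rewrite /=; ring.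
Qed.


Definition bw (W : R) (k : nat) (x : R) := `|x| <= W ^+ k.

Lemma bw_mul W a b x y : bw W a x -> bw W b y -> bw W (a + b) (x * y).
Proof. by rewrite /bw normrM exprD => h1 h2; apply: ler_pM. Qed.

Lemma bw_add W a b x y : 2 <= W -> bw W a x -> bw W b y -> bw W (maxn a b).+1 (x + y).
Proof.
rewrite /bw => W2 h1 h2.
have W1 : 1 <= W by apply: le_trans W2; rewrite ler1n.
have ha : W ^+ a <= W ^+ maxn a b by apply: ler_weXn2l => //; exact: leq_maxl.
have hb : W ^+ b <= W ^+ maxn a b by apply: ler_weXn2l => //; exact: leq_maxr.
apply: le_trans (ler_normD _ _) _; rewrite exprS.
have hp : 0 <= W ^+ maxn a b by rewrite exprn_ge0 // (le_trans ler01 W1).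
have : `|x| + `|y| <= 2 * W ^+ maxn a b by lra.
move=> h; apply: le_trans h _; apply: ler_wpM2r => //.
Qed.

Lemma bw_mono W a b x : 1 <= W -> (a <= b)%N -> bw W a x -> bw W b x.
Proof. by rewrite /bw => W1 ab h; apply: le_trans h _; exact: ler_weXn2l. Qed.

Lemma bw0 W x : `|x| <= 1 -> bw W 0 x.
Proof. by rewrite /bw expr0. Qed.

Lemma bw1 W x : `|x| <= W -> bw W 1 x.
Proof. by rewrite /bw expr1. Qed.

Arguments bw_mono {W a b x}.
Arguments bw_mul {W a b x y}.
Arguments bw_add {W a b x y}.
Arguments bw0 {W x}.
Arguments bw1 {W x}.

Section Prob.
Variables (n N : nat) (f : 'rV[R]_n -> R -> R).
Local Notation V := 'rV[R]_(n + N).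

Definition yq (b : 'I_N) (q : V) : R := rsubmx q 0 b.
Definition sqy (q : V) : R := \sum_(b < N) yq b q ^+ 2.
Definition tq (q : V) : R := sqy q / (2 * N%:R).
Definition cc : R := 2 / ((n + N)%:R - 2).
Definition Fq l (q : V) : R := iter_partial f l (lsubmx q) (tq q).
Definition Ex (q : V) : R := expR (cc * Fq [::] q).
Definition GG (q : V) : R := sqy q * Ex q.
Definition ex (i : 'I_n) : V := ebas R (lshift N i).
Definition ey (a : 'I_N) : V := ebas R (rshift n a).

Lemma lsub_ex h i q : lsubmx (h *: ex i + q) = h *: ebas R i + lsubmx q.
Proof. by apply/rowP => j; rewrite !mxE eq_lshift. Qed.

Lemma rsub_ex h i q : rsubmx (h *: ex i + q) = rsubmx q.
Proof. by apply/rowP => j; rewrite !mxE eq_sym eq_lrshift /= mulr0 add0r. Qed.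

Lemma lsub_ey h a q : lsubmx (h *: ey a + q) = lsubmx q.
Proof. by apply/rowP => j; rewrite !mxE eq_lrshift /= mulr0 add0r. Qed.

Lemma yq_ey h a b q : yq b (h *: ey a + q) = h * (a == b)%:R + yq b q.
Proof. by rewrite /yq !mxE eq_rshift /= eq_sym. Qed.

Lemma sum_dl (g : 'I_N -> R) a : \sum_(b < N) ((a == b)%:R * g b) = g a.
Proof.
rewrite (bigD1 a) //= eqxx mul1r big1 ?addr0 // => b /negbTE.
by rewrite eq_sym => ->; rewrite mul0r.
Qed.

Lemma sqy_ey h a q : sqy (h *: ey a + q) = sqy q + h * (2 * yq a q) + h ^+ 2 * 1.
Proof.
rewrite /sqy.
under eq_bigr => b _ do rewrite yq_ey.
have E : forall b, (h * (a == b)%:R + yq b q) ^+ 2 =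
   yq b q ^+ 2 + ((a == b)%:R * (h * 2 * yq b q) + (a == b)%:R * h ^+ 2).
  move=> b; case: (a == b); rewrite /=; ring.
under eq_bigr => b _ do rewrite E.
rewrite big_split /= big_split /= !sum_dl; ring.
Qed.

Lemma sqy_ex h i q : sqy (h *: ex i + q) = sqy q.
Proof. by rewrite /sqy /yq rsub_ex. Qed.


Lemma d_yq_ex q i b : is_derive q (ex i) (yq b) 0.
Proof. apply: (@isd_poly _ _ _ _ _ 0) => h; by rewrite /yq rsub_ex; ring. Qed.

Lemma d_yq_ey q a b : is_derive q (ey a) (yq b) (a == b)%:R.
Proof. apply: (@isd_poly _ _ _ _ _ 0) => h; rewrite yq_ey; ring. Qed.

Lemma d_sqy_ex q i : is_derive q (ex i) sqy 0.
Proof. apply: (@isd_poly _ _ _ _ _ 0) => h; rewrite sqy_ex; ring. Qed.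

Lemma d_sqy_ey q a : is_derive q (ey a) sqy (2 * yq a q).
Proof. apply: (@isd_poly _ _ _ _ _ 1) => h; rewrite sqy_ey; ring. Qed.

Lemma d_tq_ex q i : is_derive q (ex i) tq 0.
Proof. apply: (@isd_poly _ _ _ _ _ 0) => h; rewrite /tq sqy_ex; ring. Qed.

Lemma d_tq_ey q a : is_derive q (ey a) tq (2 * yq a q / (2 * N%:R)).
Proof.
apply: (@isd_poly _ _ _ _ _ (1 / (2 * N%:R))) => h; rewrite /tq sqy_ey; ring.
Qed.

Hypothesis Hs : smooth_pos f.

Lemma d_F_ex l q i : 0 < tq q -> is_derive q (ex i) (Fq l) (Fq (Some i :: l) q).
Proof.
move=> tq0.
have [_ [Hd _]] := Hs l (lsubmx q) (tq q) tq0.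
apply: (@line_eq _ _ _ (Fq l) (fun x' => iter_partial f l x' (tq q)) q (ex i)
          (lsubmx q) (ebas R i)).
  by move=> h; rewrite /Fq lsub_ex /tq sqy_ex.
exact: DeriveDef (Hd i) _.
Qed.

Lemma d_F_ey l q a : 0 < tq q ->
  is_derive q (ey a) (Fq l) (Fq (None :: l) q * (2 * yq a q / (2 * N%:R))).
Proof.
move=> tq0.
have [_ [_ Hd]] := Hs l (lsubmx q) (tq q) tq0.
apply: (@line_eq _ _ _ (Fq l) (fun q' => iter_partial f l (lsubmx q) (tq q')) q (ey a)
          q (ey a)).
  by move=> h; rewrite /Fq lsub_ey.
apply: isd_comp; first exact: d_tq_ey.
exact: DeriveDef Hd _.
Qed.


Lemma d_Ex_ex q i : 0 < tq q -> is_derive q (ex i) Ex (Ex q * (cc * Fq [:: Some i] q)).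
Proof.
move=> t0.
have H := isd_comp (isdM (isdC cc q (ex i)) (d_F_ex [::] q i t0)) (is_derive_expR _).
apply: is_derive_eq H _; rewrite /Ex; ring.
Qed.

Lemma d_Ex_ey q a : 0 < tq q ->
  is_derive q (ey a) Ex (Ex q * (cc * (Fq [:: None] q * (2 * yq a q / (2 * N%:R))))).
Proof.
move=> t0.
have H := isd_comp (isdM (isdC cc q (ey a)) (d_F_ey [::] q a t0)) (is_derive_expR _).
apply: is_derive_eq H _; rewrite /Ex; ring.
Qed.

Lemma tq_cont q : {for q, continuous tq}.
Proof.
apply: differentiable_continuous.
have -> : tq = (\sum_(b < N) (fun q' : V => q' 0 (rshift n b)) ^+ 2) * cst (2 * N%:R)^-1.
  apply/funext => q'; rewrite /tq /sqy /= fct_sumE /yq.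
  by congr (_ * _); apply: eq_bigr => b _; rewrite mxE.
apply: differentiableM; last exact: differentiable_cst.
apply: differentiable_sum => b; apply: differentiableX.
exact: differentiable_coord.
Qed.

Lemma near_tq p : 0 < tq p -> \forall q \near p, 0 < tq q.
Proof. move=> t0; exact: (@cvgr_gt _ _ (nbhs p) _ tq (tq p) (tq_cont p) 0 t0). Qed.


Definition dtq (a : 'I_N) (q : V) : R := 2 * yq a q / (2 * N%:R).
Definition G1x (j : 'I_n) (q : V) : R := sqy q * Ex q * cc * Fq [:: Some j] q.
Definition G1y (b : 'I_N) (q : V) : R :=
  2 * yq b q * Ex q + sqy q * Ex q * cc * Fq [:: None] q * (2 * yq b q / (2 * N%:R)).

Lemma dG_ex q i : 0 < tq q -> is_derive q (ex i) GG (G1x i q).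
Proof.
move=> t0; have H := isdM (d_sqy_ex q i) (d_Ex_ex q i t0).
apply: is_derive_eq H _; rewrite /G1x; ring.
Qed.

Lemma dG_ey q a : 0 < tq q -> is_derive q (ey a) GG (G1y a q).
Proof.
move=> t0; have H := isdM (d_sqy_ey q a) (d_Ex_ey q a t0).
apply: is_derive_eq H _; rewrite /G1y; ring.
Qed.

Lemma d2_xx q i j : 0 < tq q -> is_derive q (ex i) (G1x j)
  (sqy q * (Ex q * (cc * Fq [:: Some i] q)) * cc * Fq [:: Some j] q
   + sqy q * Ex q * cc * Fq [:: Some i; Some j] q).
Proof.
move=> t0.
have H := isdM (isdM (isdM (d_sqy_ex q i) (d_Ex_ex q i t0)) (isdC cc q (ex i)))
               (d_F_ex [:: Some j] q i t0).
apply: is_derive_eq H _; ring.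
Qed.

Lemma d2_yx q a j : 0 < tq q -> is_derive q (ey a) (G1x j)
  (2 * yq a q * Ex q * cc * Fq [:: Some j] q
   + sqy q * (Ex q * (cc * (Fq [:: None] q * dtq a q))) * cc * Fq [:: Some j] q
   + sqy q * Ex q * cc * (Fq [:: None; Some j] q * dtq a q)).
Proof.
move=> t0.
have H := isdM (isdM (isdM (d_sqy_ey q a) (d_Ex_ey q a t0)) (isdC cc q (ey a)))
               (d_F_ey [:: Some j] q a t0).
apply: is_derive_eq H _; rewrite /dtq; ring.
Qed.

Lemma d2_xy q i b : 0 < tq q -> is_derive q (ex i) (G1y b)
  (2 * yq b q * (Ex q * (cc * Fq [:: Some i] q))
   + sqy q * (Ex q * (cc * Fq [:: Some i] q)) * cc * Fq [:: None] q * dtq b q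
   + sqy q * Ex q * cc * Fq [:: Some i; None] q * dtq b q).
Proof.
move=> t0.
have H1 := isdM (isdM (isdC 2 q (ex i)) (d_yq_ex q i b)) (d_Ex_ex q i t0).
have H2 := isdM (isdM (isdM (isdM (d_sqy_ex q i) (d_Ex_ex q i t0)) (isdC cc q (ex i)))
               (d_F_ex [:: None] q i t0))
               (isdM (isdM (isdC 2 q (ex i)) (d_yq_ex q i b)) (isdC (2 * N%:R)^-1 q (ex i))).
have H := isdD H1 H2.
apply: is_derive_eq H _; rewrite /dtq; ring.
Qed.

Lemma d2_yy q a b : 0 < tq q -> is_derive q (ey a) (G1y b)
  (2 * (a == b)%:R * Ex q + 2 * yq b q * (Ex q * (cc * (Fq [:: None] q * dtq a q)))
   + (2 * yq a q * Ex q * cc * Fq [:: None] q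
      + sqy q * (Ex q * (cc * (Fq [:: None] q * dtq a q))) * cc * Fq [:: None] q
      + sqy q * Ex q * cc * (Fq [:: None; None] q * dtq a q)) * dtq b q
   + sqy q * Ex q * cc * Fq [:: None] q * (2 * (a == b)%:R / (2 * N%:R))).
Proof.
move=> t0.
have H1 := isdM (isdM (isdC 2 q (ey a)) (d_yq_ey q a b)) (d_Ex_ey q a t0).
have H2 := isdM (isdM (isdM (isdM (d_sqy_ey q a) (d_Ex_ey q a t0)) (isdC cc q (ey a)))
               (d_F_ey [:: None] q a t0))
               (isdM (isdM (isdC 2 q (ey a)) (d_yq_ey q a b)) (isdC (2 * N%:R)^-1 q (ey a))).
have H := isdD H1 H2.
apply: is_derive_eq H _; rewrite /dtq; ring.
Qed.


Lemma hess_xx p i j : 0 < tq p ->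
  hess GG p (lshift N i) (lshift N j) =
  sqy p * (Ex p * (cc * Fq [:: Some i] p)) * cc * Fq [:: Some j] p
   + sqy p * Ex p * cc * Fq [:: Some i; Some j] p.
Proof.
move=> t0; rewrite /hess mxE.
have nr : \forall q \near p, derive GG q (ebas R (lshift N j)) = G1x j q.
  by move: (near_tq p t0); apply: filterS => q tq0; have [_ ->] := dG_ex q j tq0.
rewrite (near_eq_derive _ nr).
by have [_ ->] := d2_xx p i j t0.
Qed.

Lemma hess_yx p a j : 0 < tq p ->
  hess GG p (rshift n a) (lshift N j) =
  2 * yq a p * Ex p * cc * Fq [:: Some j] p
   + sqy p * (Ex p * (cc * (Fq [:: None] p * dtq a p))) * cc * Fq [:: Some j] p
   + sqy p * Ex p * cc * (Fq [:: None; Some j] p * dtq a p).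
Proof.
move=> t0; rewrite /hess mxE.
have nr : \forall q \near p, derive GG q (ebas R (lshift N j)) = G1x j q.
  by move: (near_tq p t0); apply: filterS => q tq0; have [_ ->] := dG_ex q j tq0.
rewrite (near_eq_derive _ nr).
by have [_ ->] := d2_yx p a j t0.
Qed.

Lemma hess_xy p i b : 0 < tq p ->
  hess GG p (lshift N i) (rshift n b) =
  2 * yq b p * (Ex p * (cc * Fq [:: Some i] p))
   + sqy p * (Ex p * (cc * Fq [:: Some i] p)) * cc * Fq [:: None] p * dtq b p
   + sqy p * Ex p * cc * Fq [:: Some i; None] p * dtq b p.
Proof.
move=> t0; rewrite /hess mxE.
have nr : \forall q \near p, derive GG q (ebas R (rshift n b)) = G1y b q.
  by move: (near_tq p t0); apply: filterS => q tq0; have [_ ->] := dG_ey q b tq0.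
rewrite (near_eq_derive _ nr).
by have [_ ->] := d2_xy p i b t0.
Qed.

Lemma hess_yy p a b : 0 < tq p ->
  hess GG p (rshift n a) (rshift n b) =
  2 * (a == b)%:R * Ex p + 2 * yq b p * (Ex p * (cc * (Fq [:: None] p * dtq a p)))
   + (2 * yq a p * Ex p * cc * Fq [:: None] p
      + sqy p * (Ex p * (cc * (Fq [:: None] p * dtq a p))) * cc * Fq [:: None] p
      + sqy p * Ex p * cc * (Fq [:: None; None] p * dtq a p)) * dtq b p
   + sqy p * Ex p * cc * Fq [:: None] p * (2 * (a == b)%:R / (2 * N%:R)).
Proof.
move=> t0; rewrite /hess mxE.
have nr : \forall q \near p, derive GG q (ebas R (rshift n b)) = G1y b q.
  by move: (near_tq p t0); apply: filterS => q tq0; have [_ ->] := dG_ey q b tq0.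
rewrite (near_eq_derive _ nr).
by have [_ ->] := d2_yy p a b t0.
Qed.


Lemma sqy_ge0 q : 0 <= sqy q.
Proof. by apply: sumr_ge0 => b _; exact: sqr_ge0. Qed.

Lemma bsq_GG : (3 <= N)%N -> @bsq R n N f = GG.
Proof.
move=> HN; apply/funext => q.
have h2 : (2 : R) < (n + N)%:R.
  have : (2 < n + N)%N by apply: leq_trans HN _; exact: leq_addl.
  by rewrite -(ltr_nat R).
have m2 : (2 - (n + N)%:R : R) != 0 by rewrite subr_eq0 lt_eqF.
have m2' : (1 / (2 - (n + N)%:R) : R) != 0 by rewrite div1r invr_eq0.
rewrite /bsq /bfun /vfun /GG /Ex /Fq /tq /=.
have -> : enorm (rsubmx q) = Num.sqrt (sqy q) by [].
rewrite sqr_sqrtr ?sqy_ge0 //.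
have [s0|s0] : sqy q = 0 \/ 0 < sqy q.
  by have := sqy_ge0 q; rewrite le_eqVlt => /orP [/eqP <-|->]; [left|right].
  by rewrite s0 sqrtr0 powR0 // mul0r powR0 // expr0n /= mul0r.
rewrite powRM ?powR_ge0 ?expR_ge0 // -powRrM div1r mulfV //.
rewrite powRr1 ?sqrtr_ge0 // -expRM exprMn sqr_sqrtr ?sqy_ge0 //.
rewrite -expRM_natr; congr (_ * expR _).
rewrite /cc; field.
by rewrite -natrD m2 andbT subr_eq0 gt_eqF.
Qed.


Section AtP.
Variable p : V.
Local Notation s := (sqy p).
Local Notation tau := (tq p).
Definition F1 i := Fq [:: Some i] p.
Definition Ft := Fq [:: None] p.
Definition MH : 'M[R]_n := \matrix_(i, j) Fq [:: Some i; Some j] p.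
Definition rho : 'M[R]_n := \matrix_(i, j)
  ((N%:R * cc / 2 - 1) * Fq [:: Some i; Some j] p + N%:R / 2 * cc ^+ 2 * F1 i * F1 j).
Definition nu i := cc * F1 i / (2 * tau) + cc ^+ 2 * F1 i * Ft / 2 + cc * Fq [:: Some i; None] p / 2.
Definition nu' j := cc * F1 j / (2 * tau) + cc ^+ 2 * Ft * F1 j / 2 + cc * Fq [:: None; Some j] p / 2.
Definition lam := (2 * tau)^-1 + cc * Ft / 2.
Definition mu := (4 * cc * Ft + 2 * tau * cc ^+ 2 * Ft ^+ 2 + 2 * tau * cc * Fq [:: None; None] p) / (2 * s).
Definition MM : 'M[R]_(n + N) :=
  block_mx (MH + rho) (\matrix_(i, b) (yq b p * nu i)) (\matrix_(a, j) (yq a p * nu' j))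
    (\matrix_(a, b) ((a == b)%:R * lam + yq a p * yq b p * mu)).

Lemma hess_MM : (0 < N)%N -> 0 < s ->
  hess GG p = (2 * GG p / N%:R) *: MM.
Proof.
move=> N0 s0.
have t0 : 0 < tau by rewrite /tq divr_gt0 // mulr_gt0 // ltr0n.
have Nn0 : (N%:R : R) != 0 by rewrite pnatr_eq0 -lt0n.
have sn0 : s != 0 by rewrite gt_eqF.
have En0 : Ex p != 0 by rewrite gt_eqF // expR_gt0.
apply/matrixP => I J; rewrite [RHS]mxE.
case: (split_ordP I) => [i ->|a ->]; case: (split_ordP J) => [j ->|b ->].
- rewrite hess_xx // block_mxEul !mxE /GG /F1 /tq; field; by rewrite ?Nn0 ?sn0 ?En0.
- rewrite hess_xy // block_mxEur !mxE /GG /F1 /nu /Ft /dtq /F1 /tq; field; by rewrite ?Nn0 ?sn0 ?En0.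
- rewrite hess_yx // block_mxEdl !mxE /GG /F1 /nu' /Ft /dtq /F1 /tq; field; by rewrite ?Nn0 ?sn0 ?En0.
- rewrite hess_yy // block_mxEdr !mxE /GG /lam /mu /Ft /dtq /tq; field; by rewrite ?Nn0 ?sn0 ?En0.
Qed.
End AtP.


Section Bnds.
Variables (p : V) (W t1 : R).
Hypotheses (HN : (3 <= N)%N) (n1 : (1 <= n)%N) (W2 : 2 <= W) (s0 : 0 < sqy p)
  (Ht1 : t1 <= tq p) (t10 : 0 < t1) (Wt : t1^-1 <= W) (Wn : n%:R + 2 <= W)
  (B2 : forall i j, `|Fq [:: Some i; Some j] p| <= W)
  (B1 : forall i, `|Fq [:: Some i] p| <= W)
  (Bt : `|Fq [:: None] p| <= W) (Btt : `|Fq [:: None; None] p| <= W)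
  (Bti : forall j, `|Fq [:: None; Some j] p| <= W)
  (Bit : forall i, `|Fq [:: Some i; None] p| <= W).

Let W1 : 1 <= W. Proof. by apply: le_trans W2; rewrite ler1n. Qed.
Let N0 : 0 < (N%:R : R). Proof. by rewrite ltr0n; apply: leq_trans HN. Qed.
Let m2 : 0 < ((n + N)%:R - 2 : R).
Proof.
rewrite subr_gt0 natrD.
have : (3 : R) <= N%:R by rewrite (ler_nat R 3 N).
have : (1 : R) <= n%:R by rewrite (ler_nat R 1 n).
lra.
Qed.
Let t0 : 0 < tq p. Proof. exact: lt_le_trans Ht1. Qed.

Lemma kap_b : bw W 1 (N%:R * cc).
Proof.
apply: bw1; rewrite /cc ger0_norm; last by apply: mulr_ge0; [exact: ltW|apply: divr_ge0 => //; exact: ltW].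
apply: le_trans (_ : 3 <= W); last first.
  apply: le_trans Wn; have : (1 : R) <= n%:R by rewrite (ler_nat R 1 n).
  lra.
rewrite mulrA ler_pdivrMr // natrD.
have : (3 : R) <= N%:R by rewrite (ler_nat R 3 N).
have : (1 : R) <= n%:R by rewrite (ler_nat R 1 n).
lra.
Qed.

Lemma cc_b : bw W 0 cc.
Proof.
apply: bw0; rewrite /cc ger0_norm; last by apply: divr_ge0 => //; exact: ltW.
rewrite ler_pdivrMr // mul1r natrD.
have : (3 : R) <= N%:R by rewrite (ler_nat R 3 N).
have : (1 : R) <= n%:R by rewrite (ler_nat R 1 n).
lra.
Qed.

Lemma half_b : bw W 0 (1 / 2).
Proof. by apply: bw0; rewrite ger0_norm ?divr_ge0 // ler_pdivrMr // mul1r ler1n. Qed.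

Lemma n2_b : bw W 1 ((2 - n%:R) / 2).
Proof.
apply: bw1; rewrite normrM [`|2^-1|]ger0_norm ?invr_ge0 //.
apply: le_trans Wn.
have h : `|2 - n%:R| <= n%:R + 2 :> R.
  by rewrite ler_norml; have : (0 : R) <= n%:R by []; move=> ?; apply/andP; split; lra.
rewrite ler_pdivrMr //; have : (0 : R) <= n%:R by []; lra.
Qed.

Lemma itau_b : bw W 1 (tq p)^-1.
Proof.
apply: bw1; rewrite ger0_norm; last by rewrite invr_ge0; exact: ltW.
apply: (le_trans _ Wt).
by rewrite lef_pV2 ?posrE.
Qed.

Lemma i2tau_b : bw W 1 (2 * tq p)^-1.
Proof.
apply: bw1; rewrite ger0_norm; last by rewrite invr_ge0 mulr_ge0 //; exact: ltW.
apply: (le_trans _ Wt).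
have h2 : 0 < 2 * tq p by apply: mulr_gt0.
rewrite lef_pV2 ?posrE //; have := t0; have := Ht1; lra.
Qed.


Let mn0 : ((n + N)%:R - 2 : R) != 0. Proof. by rewrite gt_eqF. Qed.
Let Nn0 : (N%:R : R) != 0. Proof. by rewrite gt_eqF. Qed.
Let sn0 : sqy p != 0. Proof. by rewrite gt_eqF. Qed.
Let tn0 : tq p != 0. Proof. by rewrite gt_eqF. Qed.

Lemma bH i j : `|MH p i j| <= W ^+ 6.
Proof. rewrite mxE; apply: (bw_mono W1 _ (bw1 (B2 i j))); done. Qed.

Lemma brho i j : `|N%:R * rho p i j| <= W ^+ 6.
Proof.
rewrite mxE.
have -> : N%:R * ((N%:R * cc / 2 - 1) * Fq [:: Some i; Some j] p + N%:R / 2 * cc ^+ 2 * F1 p i * F1 p j)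
  = (N%:R * cc) * ((2 - n%:R) / 2) * Fq [:: Some i; Some j] p
    + (N%:R * cc) * (N%:R * cc) * (1 / 2) * F1 p i * F1 p j.
  by rewrite /cc; field; rewrite -natrD mn0.
apply: (bw_mono W1 _ (bw_add W2 (bw_mul (bw_mul kap_b n2_b) (bw1 (B2 i j)))
   (bw_mul (bw_mul (bw_mul (bw_mul kap_b kap_b) half_b) (bw1 (B1 i))) (bw1 (B1 j))))).
done.
Qed.

Lemma bnu i : `|N%:R * nu p i| <= W ^+ 6.
Proof.
rewrite /nu.
have -> : N%:R * (cc * F1 p i / (2 * tq p) + cc ^+ 2 * F1 p i * Ft p / 2 + cc * Fq [:: Some i; None] p / 2)
  = (N%:R * cc) * F1 p i * (2 * tq p)^-1 + (N%:R * cc) * cc * F1 p i * Ft p * (1 / 2)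
    + (N%:R * cc) * Fq [:: Some i; None] p * (1 / 2).
  by field; rewrite ?tn0 ?Nn0 ?sn0.
apply: (bw_mono W1 _ (bw_add W2 (bw_add W2 (bw_mul (bw_mul kap_b (bw1 (B1 i))) i2tau_b)
   (bw_mul (bw_mul (bw_mul (bw_mul kap_b cc_b) (bw1 (B1 i))) (bw1 Bt)) half_b))
   (bw_mul (bw_mul kap_b (bw1 (Bit i))) half_b))).
done.
Qed.

Lemma bnu' j : `|N%:R * nu' p j| <= W ^+ 6.
Proof.
rewrite /nu'.
have -> : N%:R * (cc * F1 p j / (2 * tq p) + cc ^+ 2 * Ft p * F1 p j / 2 + cc * Fq [:: None; Some j] p / 2)
  = (N%:R * cc) * F1 p j * (2 * tq p)^-1 + (N%:R * cc) * cc * Ft p * F1 p j * (1 / 2)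
    + (N%:R * cc) * Fq [:: None; Some j] p * (1 / 2).
  by field; rewrite ?tn0 ?Nn0 ?sn0.
apply: (bw_mono W1 _ (bw_add W2 (bw_add W2 (bw_mul (bw_mul kap_b (bw1 (B1 j))) i2tau_b)
   (bw_mul (bw_mul (bw_mul (bw_mul kap_b cc_b) (bw1 Bt)) (bw1 (B1 j))) half_b))
   (bw_mul (bw_mul kap_b (bw1 (Bti j))) half_b))).
done.
Qed.

Lemma blam : `|N%:R * (lam p - (2 * tq p)^-1)| <= W ^+ 6.
Proof.
rewrite /lam.
have -> : N%:R * ((2 * tq p)^-1 + cc * Ft p / 2 - (2 * tq p)^-1) = (N%:R * cc) * Ft p * (1 / 2).
  by field; rewrite ?tn0 ?Nn0 ?sn0.
apply: (bw_mono W1 _ (bw_mul (bw_mul kap_b (bw1 Bt)) half_b)).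
done.
Qed.

Lemma bmu : `|N%:R ^+ 2 * mu p| <= W ^+ 6.
Proof.
rewrite /mu.
have -> : N%:R ^+ 2 * ((4 * cc * Ft p + 2 * tq p * cc ^+ 2 * Ft p ^+ 2
      + 2 * tq p * cc * Fq [:: None; None] p) / (2 * sqy p))
  = (N%:R * cc) * Ft p * (tq p)^-1 + (N%:R * cc) * cc * Ft p * Ft p * (1 / 2)
    + (N%:R * cc) * Fq [:: None; None] p * (1 / 2).
  by rewrite /tq; field; rewrite sn0 Nn0.
apply: (bw_mono W1 _ (bw_add W2 (bw_add W2 (bw_mul (bw_mul kap_b (bw1 Bt)) itau_b)
   (bw_mul (bw_mul (bw_mul (bw_mul kap_b cc_b) (bw1 Bt)) (bw1 Bt)) half_b))
   (bw_mul (bw_mul kap_b (bw1 Btt)) half_b))).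
done.
Qed.

End Bnds.

End Prob.
End Calc.

Section P3.
Variable R : realType.

Definition sq2 {p q : nat} (A : 'M[R]_(p, q)) : R := \sum_(i < p) \sum_(j < q) A i j ^+ 2.

Lemma sq2_block p1 p2 q1 q2 (A : 'M[R]_(p1, q1)) (B : 'M[R]_(p1, q2))
   (C : 'M[R]_(p2, q1)) (D : 'M[R]_(p2, q2)) :
  sq2 (block_mx A B C D) = sq2 A + sq2 B + sq2 C + sq2 D.
Proof.
rewrite /sq2 big_split_ord /=.
have E1 : forall i, \sum_(j < q1 + q2) block_mx A B C D (lshift p2 i) j ^+ 2 =
   \sum_(j < q1) A i j ^+ 2 + \sum_(j < q2) B i j ^+ 2.
  move=> i; rewrite big_split_ord; congr (_ + _); apply: eq_bigr => j _.
    by rewrite block_mxEul.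
  by rewrite block_mxEur.
have E2 : forall i, \sum_(j < q1 + q2) block_mx A B C D (rshift p1 i) j ^+ 2 =
   \sum_(j < q1) C i j ^+ 2 + \sum_(j < q2) D i j ^+ 2.
  move=> i; rewrite big_split_ord; congr (_ + _); apply: eq_bigr => j _.
    by rewrite block_mxEdl.
  by rewrite block_mxEdr.
rewrite (eq_bigr _ (fun i _ => E1 i)) (eq_bigr _ (fun i _ => E2 i)).
rewrite !big_split /=; ring.
Qed.

Lemma sq2_ge0 p q (A : 'M[R]_(p, q)) : 0 <= sq2 A.
Proof. by apply: sumr_ge0 => i _; apply: sumr_ge0 => j _; exact: sqr_ge0. Qed.

Lemma nmul_le (a b A B : R) : `|a| <= A -> `|b| <= B -> `|a * b| <= A * B.
Proof. by move=> ha hb; rewrite normrM; apply: ler_pM. Qed.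

Lemma nadd_le (a b A B : R) : `|a| <= A -> `|b| <= B -> `|a + b| <= A + B.
Proof. by move=> ha hb; apply: le_trans (ler_normD _ _) _; apply: lerD. Qed.

Lemma nsub_le (a b A B : R) : `|a| <= A -> `|b| <= B -> `|a - b| <= A + B.
Proof. by move=> ha hb; apply: nadd_le; rewrite ?normrN. Qed.

Lemma ndiv_le (x C N : R) : 0 < N -> `|N * x| <= C -> `|x| <= C / N.
Proof.
move=> N0 h; rewrite ler_pdivlMr // mulrC -(gtr0_norm N0) -normrM; exact: h.
Qed.

Lemma sum_le p (g : 'I_p -> R) B : (forall i, `|g i| <= B) -> `|\sum_(i < p) g i| <= p%:R * B.
Proof.
move=> h; apply: le_trans (ler_norm_sum _ _ _) _.
apply: le_trans (ler_sum _ (fun i _ => h i)) _.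
by rewrite sumr_const card_ord mulr_natl.
Qed.

Lemma term_le_sum p (g : 'I_p -> R) i : (forall j, 0 <= g j) -> g i <= \sum_(j < p) g j.
Proof.
move=> h; rewrite (bigD1 i) //= lerDl; apply: sumr_ge0 => j _; exact: h.
Qed.

Lemma sqrtN_y (N y : R) : 0 <= N -> Num.sqrt N * `|y| <= (N + y ^+ 2) / 2.
Proof.
move=> N0; rewrite ler_pdivlMr //.
have h := sqr_ge0 (Num.sqrt N - `|y|).
rewrite sqrrB sqr_sqrtr // real_normK ?num_real // in h.
lra.
Qed.


Arguments nmul_le {a b A B}.
Arguments nadd_le {a b A B}.
Arguments nsub_le {a b A B}.
Arguments ndiv_le {x C N}.
Arguments sqrtN_y {N} y.

Lemma sum_le' p (g : 'I_p -> R) B : (forall i, g i <= B) -> \sum_(i < p) g i <= p%:R * B.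
Proof.
move=> h; apply: le_trans (ler_sum _ (fun i _ => h i)) _.
by rewrite sumr_const card_ord mulr_natl.
Qed.

Lemma sqr_le (x B : R) : `|x| <= B -> x ^+ 2 <= B ^+ 2.
Proof.
move=> h; rewrite -real_normK ?num_real //; apply: ler_pM => //.
Qed.

Lemma sum_delta p (a : 'I_p) (c : R) : \sum_(b < p) ((a == b)%:R * c) = c.
Proof.
rewrite (bigD1 a) //= eqxx mul1r big1 ?addr0 // => b /negbTE.
by rewrite eq_sym => ->; rewrite mul0r.
Qed.

Arguments sqr_le {x B}.

Section P3main.
Variables (n N : nat) (t1 t2 C0 s t lam mu : R) (H rho : 'M[R]_n) (nu nu' : 'I_n -> R)
  (y : 'I_N -> R).
Hypotheses (HN : (3 <= N)%N) (t10 : 0 < t1) (C00 : 0 <= C0) (Ht : t1 <= t <= t2)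
  (Hs : s = 2 * N%:R * t) (Hy : \sum_(b < N) y b ^+ 2 = s)
  (BH : forall i j, `|H i j| <= C0) (Brho : forall i j, `|N%:R * rho i j| <= C0)
  (Bnu : forall i, `|N%:R * nu i| <= C0) (Bnu' : forall i, `|N%:R * nu' i| <= C0)
  (Blam : `|N%:R * (lam - (2 * t)^-1)| <= C0) (Bmu : `|N%:R ^+ 2 * mu| <= C0).

Definition Mxy : 'M[R]_(n, N) := \matrix_(i, b) (y b * nu i).
Definition Myx : 'M[R]_(N, n) := \matrix_(a, j) (y a * nu' j).
Definition Myy : 'M[R]_N := \matrix_(a, b) ((a == b)%:R * lam + y a * y b * mu).
Definition M3 : 'M[R]_(n + N) := block_mx (H + rho) Mxy Myx Myy.

Let N0 : 0 < (N%:R : R).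
Proof. by rewrite ltr0n; apply: leq_trans HN. Qed.
Let t0 : 0 < t.
Proof. by case/andP: Ht => h _; apply: lt_le_trans h. Qed.
Let tt2 : t <= t2.
Proof. by case/andP: Ht. Qed.
Let s0 : 0 <= s.
Proof. by rewrite -Hy; apply: sumr_ge0 => b _; exact: sqr_ge0. Qed.
Let y2le a : y a ^+ 2 <= s.
Proof. by rewrite -Hy; apply: (@term_le_sum N (fun b => y b ^+ 2) a) => b; exact: sqr_ge0. Qed.
Let yyle a b : `|y a * y b| <= s.
Proof.
have h := sqr_ge0 (`|y a| - `|y b|).
have ha := y2le a; have hb := y2le b.
rewrite sqrrB !real_normK ?num_real // in h.
rewrite normrM; lra.
Qed.

Lemma Qpart : exists Q1 Q2 : 'M[R]_(n + N),
  offdiag_supp Q1 /\ diag_supp Q2 /\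
  (forall i j, `|Q1 i j| <= C0 * (1 + 2 * t2) /\ `|Q2 i j| <= C0 * (1 + 2 * t2)) /\
  M3 = block_mx H 0 0 ((2 * t)^-1)%:M + (Num.sqrt N%:R)^-1 *: Q1 + (N%:R)^-1 *: Q2.
Proof.
have sq0 : 0 < Num.sqrt (N%:R : R) by rewrite sqrtr_gt0.
exists (Num.sqrt N%:R *: block_mx 0 Mxy Myx 0).
exists (N%:R *: block_mx rho 0 0 (Myy - ((2 * t)^-1)%:M)).
split; first by rewrite /offdiag_supp scale_block_mx block_mxKul block_mxKdr !scaler0.
split; first by rewrite /diag_supp scale_block_mx block_mxKur block_mxKdl !scaler0.
split; last first.
  rewrite !scalerA mulVf ?gt_eqF // mulVf ?gt_eqF // !scale1r !add_block_mx.
  rewrite /M3; congr block_mx; rewrite ?addr0 ?add0r //.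
  by rewrite addrC subrK.
have tt := tt2; have t0' := t0; have N0' := N0.
have Nt : C0 * (1 + 2 * t) <= C0 * (1 + 2 * t2).
  by apply: ler_wpM2l => //; lra.
move=> I J; rewrite !scale_block_mx.
case: (split_ordP I) => [i ->|a ->]; case: (split_ordP J) => [j ->|b ->].
- rewrite block_mxEul block_mxEul !mxE mulr0 normr0.
  split; first by apply: mulr_ge0 => //; lra.
  by apply: le_trans (Brho i j) _; rewrite ler_peMr //; lra.
- rewrite block_mxEur block_mxEur !mxE mulr0 normr0.
  split; last by apply: mulr_ge0 => //; lra.
  apply: le_trans Nt.
  have h1 := ndiv_le N0 (Bnu i).
  have h2 := sqrtN_y (y b) (ltW N0).
  have h3 := y2le b.
  rewrite normrM (ger0_norm (ltW sq0)) normrM mulrA.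
  apply: le_trans (ler_pM _ _ h2 h1) _; rewrite ?mulr_ge0 ?sqrtr_ge0 //.
  apply: le_trans (_ : (N%:R + 2 * N%:R * t) / 2 * (C0 / N%:R) <= _).
    apply: ler_pM => //.
    + by apply: divr_ge0 => //; apply: addr_ge0; [lra | exact: sqr_ge0].
    + by apply: divr_ge0.
    + by rewrite -Hs; lra.
  have -> : (N%:R + 2 * N%:R * t) / 2 * (C0 / N%:R) = C0 * (1 + 2 * t) / 2.
    by field; rewrite gt_eqF.
  have hx : 0 <= C0 * (1 + 2 * t) by apply: mulr_ge0 => //; lra.
  lra.
- rewrite block_mxEdl block_mxEdl !mxE mulr0 normr0.
  split; last by apply: mulr_ge0 => //; lra.
  apply: le_trans Nt.
  have h1 := ndiv_le N0 (Bnu' j).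
  have h2 := sqrtN_y (y a) (ltW N0).
  have h3 := y2le a.
  rewrite normrM (ger0_norm (ltW sq0)) normrM mulrA.
  apply: le_trans (ler_pM _ _ h2 h1) _; rewrite ?mulr_ge0 ?sqrtr_ge0 //.
  apply: le_trans (_ : (N%:R + 2 * N%:R * t) / 2 * (C0 / N%:R) <= _).
    apply: ler_pM => //.
    + by apply: divr_ge0 => //; apply: addr_ge0; [lra | exact: sqr_ge0].
    + by apply: divr_ge0.
    + by rewrite -Hs; lra.
  have -> : (N%:R + 2 * N%:R * t) / 2 * (C0 / N%:R) = C0 * (1 + 2 * t) / 2.
    by field; rewrite gt_eqF.
  have hx : 0 <= C0 * (1 + 2 * t) by apply: mulr_ge0 => //; lra.
  lra.
- rewrite block_mxEdr block_mxEdr !mxE mulr0 normr0.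
  split; first by apply: mulr_ge0 => //; lra.
  apply: le_trans Nt.
  have -> : N%:R * ((a == b)%:R * lam + y a * y b * mu - (2 * t)^-1 *+ (a == b)) =
     (a == b)%:R * (N%:R * (lam - (2 * t)^-1)) + (N%:R ^+ 2 * mu) * (y a * y b) / N%:R.
    by rewrite -[(2 * t)^-1 *+ _]mulr_natl; field; rewrite (gt_eqF N0) (gt_eqF t0).
  apply: le_trans (nadd_le (nmul_le (_ : `|(a == b)%:R| <= 1) Blam)
                     (nmul_le (nmul_le Bmu (yyle a b)) (_ : `|(N%:R)^-1| <= (N%:R)^-1))) _.
  + by case: (a == b); rewrite ?normr1 ?normr0.
  + by rewrite ger0_norm // invr_ge0; lra.
  rewrite mul1r Hs.
  have -> : C0 * (2 * N%:R * t) * (N%:R)^-1 = C0 * (2 * t) by field; rewrite gt_eqF.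
  lra.
Qed.


Definition th := \tr M3 / (n + N)%:R.
Definition DD := n%:R / (2 * t1) + 2 * n%:R * C0 + C0 + 2 * t2 * C0.

Lemma trM3 : \tr M3 = \tr H + \tr rho + N%:R * lam + mu * s.
Proof.
rewrite /M3 mxtrace_block mxtraceD.
have -> : \tr Myy = N%:R * lam + mu * s.
  rewrite /Myy /mxtrace.
  under eq_bigr => a _ do rewrite mxE eqxx mul1r.
  rewrite big_split /= sumr_const card_ord -[lam *+ N]mulr_natl; congr (_ + _).
  rewrite -Hy mulr_sumr; apply: eq_bigr => a _; rewrite expr2; ring.
ring.
Qed.

Lemma inv2t : (2 * t)^-1 <= (2 * t1)^-1.
Proof.
have := t0; have := t10; case/andP: Ht => h1 _ ? ?.
rewrite lef_pV2 ?posrE; lra.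
Qed.

Lemma Dbound : `|N%:R * ((2 * t)^-1 - th)| <= DD.
Proof.
have mN : 0 < ((n + N)%:R : R) by rewrite natrD; have := N0; have : 0 <= (n%:R : R) by []; lra.
have E : (2 * t)^-1 - th = (n%:R * (2 * t)^-1 - \tr H - \tr rho
            - N%:R * (lam - (2 * t)^-1) - mu * s) / (n + N)%:R.
  by rewrite /th trM3 natrD; field; rewrite -?natrD ?(gt_eqF mN) ?(gt_eqF t0).
have B1 : `|n%:R * (2 * t)^-1| <= n%:R / (2 * t1).
  rewrite normrM ger0_norm // ger0_norm ?invr_ge0; last by have := t0; lra.
  by apply: ler_wpM2l => //; exact: inv2t.
have B2 : `|\tr H| <= n%:R * C0 by apply: sum_le => i; exact: BH.
have B3 : `|\tr rho| <= n%:R * C0.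
  apply: sum_le => i; apply: le_trans (ndiv_le N0 (Brho i i)) _.
  by rewrite ler_pdivrMr // ler_peMr //; rewrite ler1n; apply: leq_trans HN.
have B5 : `|mu * s| <= 2 * t2 * C0.
  have -> : mu * s = (N%:R ^+ 2 * mu) * (2 * t / N%:R).
    by rewrite Hs; field; rewrite gt_eqF.
  rewrite mulrC; apply: nmul_le => //.
  rewrite ger0_norm; last by apply: divr_ge0 => //; have := t0; lra.
  rewrite ler_pdivrMr //; have := tt2; have := t0.
  have : 1 <= (N%:R : R) by rewrite ler1n; apply: leq_trans HN.
  nra.
have Bn : `|n%:R * (2 * t)^-1 - \tr H - \tr rho - N%:R * (lam - (2 * t)^-1) - mu * s| <= DD.
  rewrite /DD.
  have := nsub_le (nsub_le (nsub_le (nsub_le B1 B2) B3) Blam) B5; lra.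
rewrite E mulrCA normrM -[DD]mulr1; apply: ler_pM => //.
rewrite ger0_norm; last by apply: divr_ge0; [have := N0; lra | have := mN; lra].
rewrite ler_pdivrMr // mul1r natrD; have : 0 <= (n%:R : R) by []; lra.
Qed.


Lemma M3_sub : M3 - th%:M = block_mx (H + rho - th%:M) Mxy Myx (Myy - th%:M).
Proof.
rewrite [in LHS](scalar_mx_block n N th).
by rewrite /M3 opp_block_mx add_block_mx !oppr0 !addr0.
Qed.

Definition B1 := (C0 + DD) * (2 * (C0 + (2 * t1)^-1) + (C0 + DD)).

Lemma xpart : `|sq2 (H + rho - th%:M) - sq2 (H - ((2 * t)^-1)%:M)| <= n%:R * (n%:R * (B1 / N%:R)).
Proof.
have N1 : 1 <= (N%:R : R) by rewrite ler1n; apply: leq_trans HN.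
have Db := Dbound.
have iv := inv2t.
have it0 : 0 <= (2 * t)^-1 by rewrite invr_ge0; have := t0; lra.
have D0 : 0 <= DD by apply: (le_trans _ Db).
rewrite /sq2 -sumrB; apply: sum_le => i; rewrite -sumrB; apply: sum_le => j; rewrite !mxE.
rewrite -[th *+ _]mulr_natr -[(2 * t)^-1 *+ _]mulr_natr.
set d := ((i == j)%:R : R).
have d1 : `|d| <= 1 by rewrite /d; case: (i == j); rewrite ?normr1 ?normr0.
have -> : (H i j + rho i j - th * d) ^+ 2 - (H i j - (2 * t)^-1 * d) ^+ 2 =
   (rho i j + d * ((2 * t)^-1 - th)) * (2 * (H i j - (2 * t)^-1 * d) + (rho i j + d * ((2 * t)^-1 - th))).
  by ring.
have he : `|rho i j + d * ((2 * t)^-1 - th)| <= (C0 + DD) / N%:R.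
  have h1 := ndiv_le N0 (Brho i j).
  have h2 := nmul_le d1 (ndiv_le N0 Db).
  have := nadd_le h1 h2.
  have -> : C0 / N%:R + 1 * (DD / N%:R) = (C0 + DD) / N%:R by field; rewrite gt_eqF.
  by [].
have hA : `|H i j - (2 * t)^-1 * d| <= C0 + (2 * t1)^-1.
  apply: le_trans (nsub_le (BH i j) (nmul_le (_ : `|(2 * t)^-1| <= (2 * t1)^-1) d1)) _.
    by rewrite ger0_norm.
  by rewrite mulr1.
have he' : `|rho i j + d * ((2 * t)^-1 - th)| <= C0 + DD.
  apply: (le_trans he); rewrite ler_pdivrMr // ler_peMr //; exact: addr_ge0.
have h := nmul_le he (nadd_le (nmul_le (_ : `|2| <= 2) hA) he').
apply: le_trans (h _) _; first by rewrite ger0_norm.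
by rewrite /B1 le_eqVlt; apply/orP; left; apply/eqP; field; rewrite ?(gt_eqF N0) ?(gt_eqF t10).
Qed.


Lemma sq2_Mxy : sq2 Mxy <= n%:R * (2 * t2 * C0 ^+ 2 / N%:R).
Proof.
have tt := tt2; have t0' := t0.
rewrite /sq2; apply: sum_le' => i.
have -> : \sum_(b < N) Mxy i b ^+ 2 = nu i ^+ 2 * s.
  rewrite -Hy mulr_sumr; apply: eq_bigr => b _; rewrite mxE; ring.
have h := sqr_le (ndiv_le N0 (Bnu i)).
apply: le_trans (_ : (C0 / N%:R) ^+ 2 * s <= _); first by apply: ler_wpM2r.
have -> : (C0 / N%:R) ^+ 2 * s = (2 * t * C0 ^+ 2) / N%:R.
  by rewrite Hs; field; rewrite gt_eqF.
apply: ler_wpM2r; first by rewrite invr_ge0 ltW.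
by apply: ler_wpM2r; [exact: sqr_ge0 | lra].
Qed.

Lemma sq2_Myx : sq2 Myx <= n%:R * (2 * t2 * C0 ^+ 2 / N%:R).
Proof.
have tt := tt2; have t0' := t0.
rewrite /sq2 exchange_big /=; apply: sum_le' => i.
have -> : \sum_(b < N) Myx b i ^+ 2 = nu' i ^+ 2 * s.
  rewrite -Hy mulr_sumr; apply: eq_bigr => b _; rewrite mxE; ring.
have h := sqr_le (ndiv_le N0 (Bnu' i)).
apply: le_trans (_ : (C0 / N%:R) ^+ 2 * s <= _); first by apply: ler_wpM2r.
have -> : (C0 / N%:R) ^+ 2 * s = (2 * t * C0 ^+ 2) / N%:R.
  by rewrite Hs; field; rewrite gt_eqF.
apply: ler_wpM2r; first by rewrite invr_ge0 ltW.
by apply: ler_wpM2r; [exact: sqr_ge0 | lra].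
Qed.

Lemma sq2_Myy : sq2 (Myy - th%:M) <= (2 * (C0 + DD) ^+ 2 + 8 * t2 ^+ 2 * C0 ^+ 2) / N%:R.
Proof.
have tt := tt2; have t0' := t0; have N0' := N0.
have N1 : 1 <= (N%:R : R) by rewrite ler1n; apply: leq_trans HN.
have E1 : forall a b, (Myy - th%:M) a b = (a == b)%:R * (lam - th) + y a * y b * mu.
  by move=> a b; rewrite !mxE -[th *+ _]mulr_natr; ring.
have key : forall u v : R, (u + v) ^+ 2 <= 2 * u ^+ 2 + 2 * v ^+ 2.
  by move=> u v; have := sqr_ge0 (u - v); rewrite sqrrB sqrrD; lra.
have step : forall a, \sum_(b < N) (Myy - th%:M) a b ^+ 2 <=
     2 * (lam - th) ^+ 2 + 2 * y a ^+ 2 * mu ^+ 2 * s.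
  move=> a.
  apply: le_trans (_ : \sum_(b < N) ((a == b)%:R * (2 * (lam - th) ^+ 2)
                 + 2 * y a ^+ 2 * mu ^+ 2 * y b ^+ 2) <= _).
    apply: ler_sum => b _; rewrite E1.
    apply: le_trans (key _ _) _.
    have dd : ((a == b)%:R : R) ^+ 2 = (a == b)%:R.
      by rewrite -natrX; case: (a == b).
    rewrite !exprMn dd; lra.
  by rewrite big_split /= sum_delta -mulr_sumr Hy.
rewrite /sq2; apply: le_trans (ler_sum _ (fun a _ => step a)) _.
rewrite big_split /= sumr_const card_ord -[_ *+ N]mulr_natl.
have -> : \sum_(i < N) 2 * y i ^+ 2 * mu ^+ 2 * s = 2 * (mu ^+ 2 * s ^+ 2).
  transitivity (2 * mu ^+ 2 * s * \sum_(i < N) y i ^+ 2).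
    by rewrite mulr_sumr; apply: eq_bigr => a _; ring.
  by rewrite Hy; ring.
have h1 : `|N%:R * (lam - th)| <= C0 + DD.
  have := nadd_le Blam Dbound; congr (`|_| <= _); ring.
have e1 : N%:R * (2 * (lam - th) ^+ 2) = 2 * ((N%:R * (lam - th)) ^+ 2 / N%:R).
  by field; rewrite gt_eqF.
have e2 : mu ^+ 2 * s ^+ 2 = (N%:R ^+ 2 * mu) ^+ 2 * (2 * t) ^+ 2 / N%:R ^+ 2.
  by rewrite Hs; field; rewrite gt_eqF.
rewrite e1 e2.
have b1 : (N%:R * (lam - th)) ^+ 2 / N%:R <= (C0 + DD) ^+ 2 / N%:R.
  by apply: ler_wpM2r; [rewrite invr_ge0 ltW | exact: sqr_le].
have b2 : (N%:R ^+ 2 * mu) ^+ 2 * (2 * t) ^+ 2 / N%:R ^+ 2 <= 4 * t2 ^+ 2 * C0 ^+ 2 / N%:R.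
  apply: le_trans (_ : C0 ^+ 2 * (2 * t2) ^+ 2 / N%:R ^+ 2 <= _).
    apply: ler_wpM2r; first by rewrite invr_ge0 exprn_ge0 // ltW.
    apply: ler_pM; rewrite ?sqr_ge0 //; first exact: sqr_le.
    apply: sqr_le; rewrite ger0_norm; lra.
  have -> : C0 ^+ 2 * (2 * t2) ^+ 2 / N%:R ^+ 2 = (4 * t2 ^+ 2 * C0 ^+ 2 / N%:R) * (N%:R)^-1.
    by field; rewrite gt_eqF.
  apply: ler_piMr; last by rewrite invf_le1.
  apply: divr_ge0; last exact: ltW.
  by apply: mulr_ge0; [apply: mulr_ge0|]; rewrite ?sqr_ge0.
have -> : (2 * (C0 + DD) ^+ 2 + 8 * t2 ^+ 2 * C0 ^+ 2) / N%:R =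
   2 * ((C0 + DD) ^+ 2 / N%:R) + 2 * (4 * t2 ^+ 2 * C0 ^+ 2 / N%:R) by ring.
lra.
Qed.


Definition CE := n%:R * (n%:R * B1) + 2 * (n%:R * (2 * t2 * C0 ^+ 2))
  + (2 * (C0 + DD) ^+ 2 + 8 * t2 ^+ 2 * C0 ^+ 2).

Lemma Epart : exists E, `|E| <= CE / N%:R /\
  hs2 (M3 - th%:M) = hs2 (H - ((2 * t)^-1)%:M) + E.
Proof.
exists (hs2 (M3 - th%:M) - hs2 (H - ((2 * t)^-1)%:M)); split; last by rewrite addrCA subrr addr0.
have hs : forall k (A : 'M[R]_k), hs2 A = sq2 A by [].
rewrite !hs M3_sub sq2_block.
have -> : sq2 (H + rho - th%:M) + sq2 Mxy + sq2 Myx + sq2 (Myy - th%:M) -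
   sq2 (H - ((2 * t)^-1)%:M) = (sq2 (H + rho - th%:M) - sq2 (H - ((2 * t)^-1)%:M))
   + sq2 Mxy + sq2 Myx + sq2 (Myy - th%:M) by ring.
have h1 : `|sq2 Mxy| <= n%:R * (2 * t2 * C0 ^+ 2 / N%:R).
  by rewrite ger0_norm ?sq2_ge0 //; exact: sq2_Mxy.
have h2 : `|sq2 Myx| <= n%:R * (2 * t2 * C0 ^+ 2 / N%:R).
  by rewrite ger0_norm ?sq2_ge0 //; exact: sq2_Myx.
have h3 : `|sq2 (Myy - th%:M)| <= (2 * (C0 + DD) ^+ 2 + 8 * t2 ^+ 2 * C0 ^+ 2) / N%:R.
  by rewrite ger0_norm ?sq2_ge0 //; exact: sq2_Myy.
apply: le_trans (nadd_le (nadd_le (nadd_le xpart h1) h2) h3) _.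
rewrite /CE le_eqVlt; apply/orP; left; apply/eqP; field; rewrite gt_eqF //.
Qed.

End P3main.

Lemma part3 n (t1 t2 C0 : R) : 0 < t1 -> 0 <= C0 -> exists C, 0 < C /\
  forall N (s t lam mu : R) (H rho : 'M[R]_n) (nu nu' : 'I_n -> R) (y : 'I_N -> R),
  (3 <= N)%N -> t1 <= t <= t2 -> s = 2 * N%:R * t -> \sum_(b < N) y b ^+ 2 = s ->
  (forall i j, `|H i j| <= C0) -> (forall i j, `|N%:R * rho i j| <= C0) ->
  (forall i, `|N%:R * nu i| <= C0) -> (forall i, `|N%:R * nu' i| <= C0) ->
  `|N%:R * (lam - (2 * t)^-1)| <= C0 -> `|N%:R ^+ 2 * mu| <= C0 ->
  (exists Q1 Q2 : 'M[R]_(n + N),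
    offdiag_supp Q1 /\ diag_supp Q2 /\
    (forall i j, `|Q1 i j| <= C /\ `|Q2 i j| <= C) /\
    M3 n N lam mu H rho nu nu' y = block_mx H 0 0 ((2 * t)^-1)%:M
        + (Num.sqrt N%:R)^-1 *: Q1 + (N%:R)^-1 *: Q2) /\
  (exists E, `|E| <= C / N%:R /\
    hs2 (M3 n N lam mu H rho nu nu' y - (\tr (M3 n N lam mu H rho nu nu' y) / (n + N)%:R)%:M)
      = hs2 (H - ((2 * t)^-1)%:M) + E).
Proof.
move=> t10 C00.
set CQ := C0 * (1 + 2 * t2).
set CE0 := CE n t1 t2 C0.
exists (1 + `|CQ| + `|CE0|); split.
  by apply: (lt_le_trans ltr01); rewrite -addrA lerDl addr_ge0.
move=> N s t lam mu H rho nu nu' y HN Ht Hs Hy BH Brho Bnu Bnu' Blam Bmu.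
have N0 : 0 < (N%:R : R) by rewrite ltr0n; apply: leq_trans HN.
have leC : forall x : R, x <= `|x| by move=> x; exact: ler_norm.
have hQ : CQ <= 1 + `|CQ| + `|CE0|.
  by apply: (le_trans (leC CQ)); rewrite -addrA addrCA lerDl addr_ge0.
have hE : CE0 <= 1 + `|CQ| + `|CE0|.
  by apply: (le_trans (leC CE0)); rewrite lerDr addr_ge0.
split.
  have [Q1 [Q2 [h1 [h2 [h3 h4]]]]] := @Qpart n N t1 t2 C0 s t lam mu H rho nu nu' y HN t10 C00 Ht Hs Hy Brho Bnu Bnu' Blam Bmu.
  exists Q1, Q2; split => //; split => //; split => // i j.
  by have [a b] := h3 i j; split; apply: le_trans hQ.
have [E [h1 h2]] := @Epart n N t1 t2 C0 s t lam mu H rho nu nu' y HN t10 C00 Ht Hs Hy BH Brho Bnu Bnu' Blam Bmu.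
exists E; split => //.
apply: le_trans h1 _; apply: ler_wpM2r; [by rewrite invr_ge0 ltW | exact: hE].
Qed.

End P3.


Section Final.
Variable R : realType.

Lemma hs2Z k (a : R) (A : 'M[R]_k) : hs2 (a *: A) = a ^+ 2 * hs2 A.
Proof.
rewrite /hs2 mulr_sumr; apply: eq_bigr => i _; rewrite mulr_sumr.
by apply: eq_bigr => j _; rewrite mxE exprMn.
Qed.

Lemma BZ k (a m : R) (A : 'M[R]_k) :
  a *: A - (\tr (a *: A) / m)%:M = a *: (A - (\tr A / m)%:M).
Proof. by rewrite mxtraceZ scalerBr scale_scalar_mx mulrA. Qed.

Lemma prod3_ge (x y z : R) : 1 <= x -> 1 <= y -> 1 <= z ->
  [/\ x <= x * y * z, y <= x * y * z & z <= x * y * z].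
Proof.
move=> hx hy hz.
have x0 : 0 <= x by apply: le_trans hx.
have y0 : 0 <= y by apply: le_trans hy.
have z0 : 0 <= z by apply: le_trans hz.
have xy : 1 <= x * y by rewrite -[1]mulr1; apply: ler_pM.
have xy0 : 0 <= x * y by apply: mulr_ge0.
have h1 : x <= x * y by rewrite ler_peMr.
have h2 : y <= x * y by rewrite ler_peMl.
have h3 : x * y <= x * y * z by rewrite ler_peMr.
have h4 : z <= x * y * z by rewrite ler_peMl.
split; [exact: le_trans h3 | exact: le_trans h3 | exact: h4].
Qed.

End Final.

Theorem lemma3p2 (R : realType) (n : nat) (f : 'rV[R]_n -> R -> R) (tau1 tau2 : R) :
  (1 <= n)%N -> 0 < tau1 -> tau1 < tau2 ->
  smooth_pos f -> heat_sol f -> bounded_partials f tau1 tau2 ->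
  exists C : R, 0 < C /\
    forall (N : nat), (3 <= N)%N -> forall p : 'rV[R]_(n + N),
      let x := lsubmx p in
      let tau := enorm (rsubmx p) ^+ 2 / (2 * N%:R) in
      tau1 <= tau <= tau2 ->
      (exists Q1 Q2 : 'M[R]_(n + N),
          offdiag_supp Q1 /\ diag_supp Q2 /\
          (forall i j, `|Q1 i j| <= C /\ `|Q2 i j| <= C) /\
          hess (@bsq R n N f) p =
            (2 * bsq f p / N%:R) *:
              (block_mx (hessx f x tau) 0 0 ((2 * tau)^-1)%:M
               + (Num.sqrt N%:R)^-1 *: Q1 + (N%:R)^-1 *: Q2))
      /\
      (exists E : R, `|E| <= C / N%:R /\
          hs2 (Bmat f p) =
            4 * bsq f p ^+ 2 / N%:R ^+ 2 *
              (hs2 (hessx f x tau - ((2 * tau)^-1)%:M) + E)).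
Proof.
move=> n1 t10 t12 Hsm _ Hb.
have [Cf HCf] := choice Hb.
pose g i j := `|Cf [:: Some i; Some j]| + `|Cf [:: Some i]| + `|Cf [:: Some i; None]|
   + `|Cf [:: None; Some i]|.
pose Lf := \sum_(i < n) \sum_(j < n) g i j + `|Cf [:: None]| + `|Cf [:: None; None]|.
have g0 : forall i j, 0 <= g i j by move=> i j; rewrite /g !addr_ge0.
have S0 : 0 <= \sum_(i < n) \sum_(j < n) g i j.
  by apply: sumr_ge0 => i _; apply: sumr_ge0 => j _.
have Lg : forall i j, g i j <= Lf.
  move=> i j.
  apply: le_trans (@term_le_sum R n (fun j => g i j) j (g0 i)) _.
  apply: le_trans (@term_le_sum R n (fun i => \sum_(j < n) g i j) i _) _.
    by move=> k; apply: sumr_ge0 => l _.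
  by rewrite /Lf -addrA lerDl addr_ge0.
have Lf0 : 0 <= Lf by apply: le_trans (Lg (Ordinal n1) (Ordinal n1)); exact: g0.
have hb : forall l x t, tau1 <= t <= tau2 -> `|iter_partial f l x t| <= `|Cf l|.
  by move=> l x t ht; apply: le_trans (HCf l x t ht) _; exact: ler_norm.
pose W := 3 * (n%:R + 2) * (Lf + 1) * (1 + tau1^-1).
have [Wa Wb Wc] : [/\ 3 * (n%:R + 2) <= W, Lf + 1 <= W & 1 + tau1^-1 <= W].
  apply: prod3_ge.
  - by have : (0 : R) <= n%:R by []; lra.
  - by lra.
  - have : 0 <= tau1^-1 by rewrite invr_ge0; exact: ltW.
    lra.
have W2 : 2 <= W by have : (0 : R) <= n%:R by []; lra.
have Wn : n%:R + 2 <= W by have : (0 : R) <= n%:R by []; lra.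
have WL : Lf <= W by lra.
have Wt : tau1^-1 <= W by lra.
have C0ge0 : 0 <= W ^+ 6 by rewrite exprn_ge0 //; lra.
have [C [Cpos HC]] := @part3 R n tau1 tau2 (W ^+ 6) t10 C0ge0.
exists C; split => //.
move=> N HN p x tau Htau.
have N0 : (0 < N)%N by apply: leq_trans HN.
have Nr0 : 0 < (N%:R : R) by rewrite ltr0n.
have tauE : tau = tq R n N p.
  rewrite /tau /tq (_ : enorm (rsubmx p) = Num.sqrt (sqy R n N p)) //.
  by rewrite sqr_sqrtr // sqy_ge0.
rewrite tauE in Htau *.
have t0 : 0 < tq R n N p by case/andP: Htau => h _; apply: lt_le_trans h.
have Hs' : sqy R n N p = 2 * N%:R * tq R n N p by rewrite /tq; field; rewrite gt_eqF.
have s0 : 0 < sqy R n N p by rewrite Hs' mulr_gt0 // mulr_gt0.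
have hF : forall l, `|Fq R n N f l p| <= `|Cf l| by move=> l; exact: hb.
have nn : forall l, 0 <= `|Cf l| by move=> l; exact: normr_ge0.
have B2 : forall i j, `|Fq R n N f [:: Some i; Some j] p| <= W.
  move=> i j; apply: le_trans (hF _) _; have := Lg i j; rewrite /g.
  have := nn [:: Some i]; have := nn [:: Some i; None]; have := nn [:: None; Some i]; lra.
have B1 : forall i, `|Fq R n N f [:: Some i] p| <= W.
  move=> i; apply: le_trans (hF _) _; have := Lg i i; rewrite /g.
  have := nn [:: Some i; Some i]; have := nn [:: Some i; None]; have := nn [:: None; Some i]; lra.
have Bit : forall i, `|Fq R n N f [:: Some i; None] p| <= W.
  move=> i; apply: le_trans (hF _) _; have := Lg i i; rewrite /g.
  have := nn [:: Some i; Some i]; have := nn [:: Some i]; have := nn [:: None; Some i]; lra.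
have Bti : forall i, `|Fq R n N f [:: None; Some i] p| <= W.
  move=> i; apply: le_trans (hF _) _; have := Lg i i; rewrite /g.
  have := nn [:: Some i; Some i]; have := nn [:: Some i]; have := nn [:: Some i; None]; lra.
have Bt : `|Fq R n N f [:: None] p| <= W.
  apply: le_trans (hF _) _; rewrite /Lf in WL.
  have := nn [:: None; None]; lra.
have Btt : `|Fq R n N f [:: None; None] p| <= W.
  apply: le_trans (hF _) _; rewrite /Lf in WL.
  have := nn [:: None]; lra.
have Ht1 : tau1 <= tq R n N p by case/andP: Htau.
have HH := HC N (sqy R n N p) (tq R n N p) (lam R n N f p) (mu R n N f p)
   (MH R n N f p) (rho R n N f p) (nu R n N f p) (nu' R n N f p) (fun b => yq R n N b p)
   HN Htau Hs' (erefl _)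
   (@bH R n N f p W W2 B2)
   (@brho R n N f p W HN n1 W2 Wn B2 B1)
   (@bnu R n N f p W tau1 HN n1 W2 Ht1 t10 Wt Wn B1 Bt Bit)
   (@bnu' R n N f p W tau1 HN n1 W2 Ht1 t10 Wt Wn B1 Bt Bti)
   (@blam R n N f p W tau1 HN n1 W2 Ht1 t10 Wn Bt)
   (@bmu R n N f p W tau1 HN n1 W2 s0 Ht1 t10 Wt Wn Bt Btt).
have [[Q1 [Q2 [h1 [h2 [h3 h4]]]]] [E [hE1 hE2]]] := HH.
have MME : MM R n N f p = M3 R n N (lam R n N f p) (mu R n N f p) (MH R n N f p)
   (rho R n N f p) (nu R n N f p) (nu' R n N f p) (fun b => yq R n N b p) := erefl.
have hM := @hess_MM R n N f Hsm p N0 s0.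
split.
  exists Q1, Q2; split => //; split => //; split => //.
  by rewrite (@bsq_GG R n N f HN) hM MME h4.
exists E; split => //.
rewrite /Bmat (@bsq_GG R n N f HN) hM MME BZ hs2Z hE2.
congr (_ * _); field; rewrite ?(gt_eqF Nr0) //.
Qed.
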